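(* Let $k$ be a field, $Q$ a finite quiver with vertex set $Q_0$ and arrow set $Q_1$, $kQ$ its path algebra, and $X$ a $kQ$-bimodule which is finite dimensional over $k$. Then $$\dim_k H^1(kQ,X)=\dim_k(X^{kQ})-\dim_k(X^{kQ_0})+\sum_{x,y\in Q_0}|yQ_1x|\,\dim_k(yXx),$$ where $yQ_1x$ is the set of arrows from $x$ to $y$.
   Context: $H^1(kQ,X)$ is the first Hochschild cohomology of $kQ$ with coefficients in $X$ (derivations $kQ\to X$ modulo inner derivations). The path algebra $kQ$ has basis the paths of $Q$ (including the vertices as length-zero paths), multiplication given by concatenation when possible and $0$ otherwise; vertices are orthogonal idempotents summing to $1$. $kQ_0\subseteq kQ$ is the subalgebra spanned by the vertices. For a subalgebra $A$, $X^A=\{x\in X\mid ax=xa\ \forall a\in A\}$. For vertices $x,y$, $yXx$ denotes the subspace $y\cdot X\cdot x$. *)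

(* Defs.v *)
From HB Require Import structures.
From mathcomp Require Import all_boot all_order all_algebra.
Set Implicit Arguments. Unset Strict Implicit. Unset Printing Implicit Defensive.
Import GRing.Theory.
Local Open Scope ring_scope.

(* A path of Q is a starting vertex together with the list of arrows traversed *)
(* in order (the empty list gives the trivial path e_x at vertex x).           *)
Section Quiver.
Variables (nV nA : nat) (src tgt : 'I_nA -> 'I_nV).

Fixpoint path_ok (x : 'I_nV) (s : seq 'I_nA) : bool :=
  if s is a :: s' then (src a == x) && path_ok (tgt a) s' else true.

Fixpoint path_end (x : 'I_nV) (s : seq 'I_nA) : 'I_nV :=
  if s is a :: s' then path_end (tgt a) s' else x.

(* the basis of kQ: paths of Q (including trivial paths) *)
Definition qpath := {p : 'I_nV * seq 'I_nA | path_ok p.1 p.2}.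

Definition qsrc (p : qpath) : 'I_nV := (val p).1.
Definition qtgt (p : qpath) : 'I_nV := path_end (val p).1 (val p).2.

Definition vpath (x : 'I_nV) : qpath := exist _ (x, [::]) isT.

(* Product of basis paths in kQ, with the convention that an arrow a : x -> y  *)
(* satisfies e_y a e_x = a: the product p * q ("p after q") is the            *)
(* concatenation when qsrc p = qtgt q, and 0 (encoded as None) otherwise.     *)
Definition qmul (p q : qpath) : option qpath :=
  if qsrc p == qtgt q then @insub _ (fun u : 'I_nV * seq 'I_nA => path_ok u.1 u.2) qpath (qsrc q, (val q).2 ++ (val p).2) else None.

Variables (K : fieldType) (X : vectType K).

(* The kQ-bimodule structure on the finite-dimensional k-space X, given on the *)
(* basis of paths: L p = (v |-> p v), R p = (v |-> v p), extended linearly.    *)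
Definition prod_act (F : qpath -> 'End(X)) (o : option qpath) : 'End(X) :=
  if o is Some r then F r else 0.

Definition is_bimod (L R : qpath -> 'End(X)) : Prop :=
  [/\ \sum_(x : 'I_nV) L (vpath x) = \1%VF,
      \sum_(x : 'I_nV) R (vpath x) = \1%VF,
      (forall p q, (L p \o L q)%VF = prod_act L (qmul p q)),
      (forall p q, (R q \o R p)%VF = prod_act R (qmul p q)) &
      (forall p q, (L p \o R q)%VF = (R q \o L p)%VF)].

Section Bimod.
Variables (L R : qpath -> 'End(X)).

Definition prod_val (D : qpath -> X) (o : option qpath) : X :=
  if o is Some r then D r else 0.

(* k-derivations kQ -> X, given by their values on the basis of paths:        *)
(* d(p q) = p d(q) + d(p) q.                                                  *)
Definition is_der (D : qpath -> X) : Prop :=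
  forall p q, prod_val D (qmul p q) = L p (D q) + R q (D p).

Definition innerD (x : X) (p : qpath) : X := L p x - R p x.

(* dim_k H^1(kQ, X) = d : Der(kQ,X)/Inn(kQ,X) has a basis of d classes *)
Definition H1_dim (d : nat) : Prop :=
  exists D : 'I_d -> qpath -> X,
    [/\ (forall i, is_der (D i)),
        (forall E, is_der E -> exists (c : 'I_d -> K) (x : X),
             forall p, E p = \sum_(i < d) c i *: D i p + innerD x p) &
        (forall (c : 'I_d -> K) (x : X),
             (forall p, \sum_(i < d) c i *: D i p = innerD x p) ->
             forall i, c i = 0)].

Definition inv_kQ (v : X) : Prop := forall p, L p v = R p v.
Definition inv_kQ0 (v : X) : Prop :=
  forall x : 'I_nV, L (vpath x) v = R (vpath x) v.

End Bimod.
End Quiver.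

Definition has_dim (K : fieldType) (X : vectType K) (P : X -> Prop) (d : nat) :=
  exists U : {vspace X}, (forall v, v \in U <-> P v) /\ \dim U = d.

(* Main.v *)
Require Import Defs.
From HB Require Import structures.
From mathcomp Require Import all_boot all_order all_algebra.
Set Implicit Arguments. Unset Strict Implicit. Unset Printing Implicit Defensive.
Import GRing.Theory.
Local Open Scope ring_scope.

Section Pf.
Variables (K : fieldType) (X : vectType K) (nV nA : nat) (src tgt : 'I_nA -> 'I_nV).
Variables (L R : qpath src tgt -> 'End(X)).
Hypothesis hX : is_bimod L R.

Local Notation qp := (qpath src tgt).
Local Notation e := (vpath src tgt).

Lemma apath_ok (a : 'I_nA) : path_ok src tgt (src a) [:: a].
Proof. by rewrite /= eqxx. Qed.
Definition apath a : qp := exist _ (src a, [:: a]) (apath_ok a).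

Lemma LL p q : (L p \o L q)%VF = prod_act L (qmul p q). Proof. by case: hX. Qed.
Lemma RR p q : (R q \o R p)%VF = prod_act R (qmul p q). Proof. by case: hX. Qed.
Lemma LRv p q v : L p (R q v) = R q (L p v).
Proof. case: hX => _ _ _ _ H. by rewrite -comp_lfunE H comp_lfunE. Qed.
Lemma LLv p q v : L p (L q v) = prod_act L (qmul p q) v.
Proof. by rewrite -LL comp_lfunE. Qed.
Lemma RRv p q v : R q (R p v) = prod_act R (qmul p q) v.
Proof. by rewrite -RR comp_lfunE. Qed.

Lemma path_ok_cat x s1 s2 : path_ok src tgt x s1 ->
  path_ok src tgt (path_end tgt x s1) s2 -> path_ok src tgt x (s1 ++ s2).
Proof.
elim: s1 x => [//|a s1 IH] x /= /andP[-> h1] h2 /=; exact: IH.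
Qed.

Lemma qmul_none (p q : qp) : qsrc p != qtgt q -> qmul p q = None.
Proof. by rewrite /qmul => /negPf ->. Qed.

Lemma qmul_some (p q : qp) : qsrc p = qtgt q ->
  exists2 r, qmul p q = Some r & val r = (qsrc q, (val q).2 ++ (val p).2).
Proof.
move=> E; rewrite /qmul E eqxx; case: insubP => [r _ Hr|]; first by exists r.
case: q E => [[x s] h] /= E; case: p E => [[y t] h'] /= E.
rewrite /qsrc /= in E *; rewrite path_ok_cat //.
by rewrite /qtgt /= in E; rewrite -E.
Qed.

Lemma qmul_el (p : qp) : qmul (e (qtgt p)) p = Some p.
Proof.
have [r -> Hr] := qmul_some (p := e (qtgt p)) (q := p) erefl.
by congr Some; apply: val_inj; rewrite Hr cats0 /qsrc; case: (val p).
Qed.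

Lemma qmul_er (p : qp) : qmul p (e (qsrc p)) = Some p.
Proof.
have [r -> Hr] := qmul_some (p := p) (q := e (qsrc p)) erefl.
by congr Some; apply: val_inj; rewrite Hr /qsrc /=; case: (val p).
Qed.

Lemma qmul_ee y x : qmul (e y) (e x) = if y == x then Some (e x) else None.
Proof.
case: eqP => [->|/eqP ne]; first exact: (qmul_el (e x)).
exact: qmul_none.
Qed.

Lemma qmul_step a s (h : path_ok src tgt (tgt a) s) (h' : path_ok src tgt (src a) (a :: s)) :
  qmul (exist _ (tgt a, s) h) (apath a) = Some (exist _ (src a, a :: s) h').
Proof.
have [r -> Hr] := qmul_some (p := exist _ (tgt a, s) h) (q := apath a) erefl.
by congr Some; apply: val_inj; rewrite Hr.
Qed.

Lemma qpath_ind (P : qp -> Prop) :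
  (forall x, P (e x)) ->
  (forall a s (h : path_ok src tgt (tgt a) s) (h' : path_ok src tgt (src a) (a :: s)),
      P (exist _ (tgt a, s) h) -> P (exist _ (src a, a :: s) h')) ->
  forall p, P p.
Proof.
move=> H0 HS.
suff H : forall s x (h : path_ok src tgt x s), P (exist _ (x, s) h).
  by case=> [[x s] h]; exact: H.
elim=> [|a s IH] x h.
  by have -> : exist _ (x, [::]) h = e x by apply: val_inj.
have /andP[/eqP Ex h2] := h; destruct Ex.
exact: (HS a s h2 h (IH _ h2)).
Qed.

Local Notation Le x := (L (e x)).
Local Notation Re x := (R (e x)).

Lemma Lel (p : qp) v : Le (qtgt p) (L p v) = L p v.
Proof. by rewrite LLv qmul_el. Qed.
Lemma Ler (p : qp) v : L p (Le (qsrc p) v) = L p v.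
Proof. by rewrite LLv qmul_er. Qed.
Lemma Rer (p : qp) v : R p (Re (qtgt p) v) = R p v.
Proof. by rewrite RRv qmul_el. Qed.
Lemma Rel (p : qp) v : Re (qsrc p) (R p v) = R p v.
Proof. by rewrite RRv qmul_er. Qed.
Lemma LeLe y x v : Le y (Le x v) = if y == x then Le x v else 0.
Proof. by rewrite LLv qmul_ee; case: eqP => // _; rewrite lfunE. Qed.
Lemma ReRe y x v : Re x (Re y v) = if y == x then Re x v else 0.
Proof. by rewrite RRv qmul_ee; case: eqP => // _; rewrite lfunE. Qed.
Lemma Leid x v : Le x (Le x v) = Le x v.
Proof. by rewrite LeLe eqxx. Qed.
Lemma Reid x v : Re x (Re x v) = Re x v.
Proof. by rewrite ReRe eqxx. Qed.


Local Notation La a := (L (apath a)).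
Local Notation Ra a := (R (apath a)).

Fixpoint Lprod (s : seq 'I_nA) : 'End(X) :=
  if s is a :: s' then (Lprod s' \o La a)%VF else \1%VF.
Fixpoint Rprod (s : seq 'I_nA) : 'End(X) :=
  if s is a :: s' then (Ra a \o Rprod s')%VF else \1%VF.

Lemma Lprod_cat s1 s2 v : Lprod (s1 ++ s2) v = Lprod s2 (Lprod s1 v).
Proof.
elim: s1 v => [|a s1 IH] v /=; first by rewrite id_lfunE.
by rewrite !comp_lfunE IH.
Qed.

Lemma R_Lprod q s v : R q (Lprod s v) = Lprod s (R q v).
Proof.
elim: s v => [|a s IH] v /=; first by rewrite !id_lfunE.
by rewrite !comp_lfunE IH LRv.
Qed.

Lemma Rprod_Lprod t s v : Rprod t (Lprod s v) = Lprod s (Rprod t v).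
Proof.
elim: t v => [|a t IH] v /=; first by rewrite !id_lfunE.
by rewrite !comp_lfunE IH R_Lprod.
Qed.

Lemma L_prod (p : qp) v : L p v = Lprod (val p).2 (Le (qsrc p) v).
Proof.
elim/qpath_ind: p v => [x v|a s h h' IH v] /=; first by rewrite id_lfunE.
have := LLv (exist _ (tgt a, s) h) (apath a) v; rewrite (qmul_step h h') /= => <-.
rewrite IH /= comp_lfunE.
by rewrite (Lel (apath a)) (Ler (apath a)).
Qed.

Lemma R_prod (p : qp) v : R p v = Re (qsrc p) (Rprod (val p).2 v).
Proof.
elim/qpath_ind: p v => [x v|a s h h' IH v] /=; first by rewrite id_lfunE.
have := RRv (exist _ (tgt a, s) h) (apath a) v; rewrite (qmul_step h h') /= => <-.
rewrite IH /= comp_lfunE.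
by rewrite (Rer (apath a)) (Rel (apath a)).
Qed.

Lemma Rprod_e (q : qp) v :
  Re (qsrc q) (Rprod (val q).2 (Re (qtgt q) v)) = Rprod (val q).2 (Re (qtgt q) v).
Proof.
elim/qpath_ind: q v => [x v|a s h h' IH v] /=; first by rewrite id_lfunE Reid.
by rewrite comp_lfunE (Rel (apath a)).
Qed.

Fixpoint Dl (m : 'I_nA -> X) (s : seq 'I_nA) : X :=
  if s is a :: s' then Ra a (Dl m s') + Lprod s' (m a) else 0.
Definition Dm m (p : qp) := Dl m (val p).2.

Lemma Dl_cat m s1 s2 : Dl m (s1 ++ s2) = Rprod s1 (Dl m s2) + Lprod s2 (Dl m s1).
Proof.
elim: s1 => [|a s1 IH] /=; first by rewrite id_lfunE linear0 addr0.
by rewrite IH Lprod_cat comp_lfunE !linearD /= R_Lprod addrA.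
Qed.

Lemma Dm_inv m (hm : forall a, Le (tgt a) (m a) = m a /\ Re (src a) (m a) = m a)
  (p : qp) : Le (qtgt p) (Dm m p) = Dm m p /\ Re (qsrc p) (Dm m p) = Dm m p.
Proof.
elim/qpath_ind: p => [x|a s h h' [IH1 IH2]]; first by rewrite /Dm /= !linear0.
rewrite /Dm /= in IH1 IH2 *.
have EL : Lprod s (m a) = L (exist _ (tgt a, s) h) (m a).
  by rewrite L_prod /= (proj1 (hm a)).
split.
  rewrite linearD /= LRv IH1; congr (_ + _).
  by rewrite EL (Lel (exist _ (tgt a, s) h)).
by rewrite linearD /= (Rel (apath a)) R_Lprod (proj2 (hm a)).
Qed.

Lemma Dm_der m (hm : forall a, Le (tgt a) (m a) = m a /\ Re (src a) (m a) = m a) :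
  is_der L R (Dm m).
Proof.
move=> p q; case: (eqVneq (qsrc p) (qtgt q)) => [E|ne].
  have [r -> Hr] := qmul_some E.
  rewrite /= /Dm Hr /= Dl_cat addrC; congr (_ + _).
    by rewrite L_prod E (proj1 (Dm_inv hm q)).
  have -> : Dl m (val p).2 = Re (qtgt q) (Dl m (val p).2).
    by rewrite -E; have [_ ->] := Dm_inv hm p.
  by rewrite [R q _]R_prod Rprod_e.
rewrite qmul_none //= -(proj1 (Dm_inv hm q)) -(proj2 (Dm_inv hm p)).
by rewrite LLv RRv !qmul_none //= !zero_lfunE addr0.
Qed.

Lemma Dm_e m x : Dm m (e x) = 0. Proof. by []. Qed.
Lemma Dm_a m a : Dm m (apath a) = m a.
Proof. by rewrite /Dm /= linear0 add0r id_lfunE. Qed.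

Lemma innerD_der x : is_der L R (innerD L R x).
Proof.
move=> p q; rewrite /innerD !linearB /= LLv RRv LRv.
by case: (qmul p q) => [r|] /=; rewrite ?zero_lfunE addrA subrK // subrr.
Qed.

Lemma der_comb d (F : 'I_d -> qp -> X) (c : 'I_d -> K) x :
  (forall i, is_der L R (F i)) ->
  is_der L R (fun p => \sum_(i < d) c i *: F i p + innerD L R x p).
Proof.
move=> HF p q; have HI := innerD_der x p q.
have HS : prod_val (fun p => \sum_(i < d) c i *: F i p) (qmul p q) =
   L p (\sum_(i < d) c i *: F i q) + R q (\sum_(i < d) c i *: F i p).
  rewrite !linear_sum -big_split /=.
  case E: (qmul p q) => [r|] /=.
    by apply: eq_bigr => i _; rewrite !linearZ -scalerDr; have := HF i p q; rewrite E /= => ->.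
  by rewrite big1 // => i _; rewrite !linearZ -scalerDr; have := HF i p q; rewrite E /= => <-; rewrite scaler0.
rewrite linearD [R q _]linearD /= addrACA -HS -HI.
by case: (qmul p q) => [r|] /=; rewrite ?addr0.
Qed.

Lemma der_unique D1 D2 : is_der L R D1 -> is_der L R D2 ->
  (forall x, D1 (e x) = D2 (e x)) -> (forall a, D1 (apath a) = D2 (apath a)) ->
  forall p, D1 p = D2 p.
Proof.
move=> H1 H2 He Ha; elim/qpath_ind => // a s h h' IH.
have := H1 (exist _ (tgt a, s) h) (apath a); have := H2 (exist _ (tgt a, s) h) (apath a).
by rewrite (qmul_step h h') /= => -> ->; rewrite IH Ha.
Qed.

Lemma der_vert_zero D : is_der L R D -> (forall x, D (e x) = 0) ->
  forall p, Le (qtgt p) (D p) = D p /\ Re (qsrc p) (D p) = D p.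
Proof.
move=> HD H0 p; split.
  by have := HD (e (qtgt p)) p; rewrite qmul_el /= H0 linear0 addr0 => <-.
by have := HD p (e (qsrc p)); rewrite qmul_er /= H0 linear0 add0r => <-.
Qed.

Lemma sub_eq (a b c : X) : a = b + c -> c = a - b.
Proof. by move=> ->; rewrite addrC addKr. Qed.

Lemma sumLe v : \sum_y Le y v = v.
Proof. by case: hX => H _ _ _ _; rewrite -sum_lfunE H id_lfunE. Qed.

Lemma vertex_inner E (HE : is_der L R E) x :
  innerD L R (\sum_y Le y (E (e y))) (e x) = E (e x).
Proof.
rewrite /innerD !linear_sum /=.
have -> : \sum_y Le x (Le y (E (e y))) = Le x (E (e x)).
  rewrite (bigD1 x) //= big1 ?addr0 => [|y ne]; first by rewrite Leid.
  by rewrite LeLe eq_sym (negPf ne).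
have Hy : forall y, Re x (Le y (E (e y))) =
    (if y == x then Le x (E (e x)) else 0) - Le y (E (e x)).
  move=> y; have H := HE (e y) (e x); rewrite qmul_ee in H.
  rewrite -LRv.
  have H2 := congr1 (fun v => Le y v) H; rewrite /= linearD /= Leid in H2.
  apply: sub_eq; rewrite -H2.
  by case: eqP => [->|_] //=; rewrite linear0.
rewrite sumrN (eq_bigr _ (fun y _ => Hy y)) sumrB sumLe.
rewrite -big_mkcond /= (big_pred1 x).
  by rewrite opprB addrC subrK. by move=> y; rewrite /= eq_sym.
Qed.

Local Notation V := {ffun 'I_nA -> X}.

Definition injf (a : 'I_nA) (v : X) : V := [ffun b => if b == a then v else 0].
Lemma injf_lin a : linear (injf a).
Proof.
move=> k u v; apply/ffunP => b; rewrite !ffunE.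
by case: eqP => _; rewrite ?scaler0 ?addr0.
Qed.
Definition injL a : {linear X -> V} :=
  HB.pack (injf a) (GRing.isLinear.Build _ _ _ _ (injf a) (injf_lin a)).
Definition inj a : 'Hom(X, V) := linfun (injL a).
Lemma injE a v b : inj a v b = if b == a then v else 0.
Proof. by rewrite (lfunE (injL a)) ffunE. Qed.

Definition phif (v : X) : V := [ffun a => La a v - Ra a v].
Lemma phif_lin : linear phif.
Proof.
move=> k u v; apply/ffunP => b; rewrite !ffunE !linearP /=.
by rewrite scalerBr scalerN addrACA.
Qed.
Definition phiL : {linear X -> V} :=
  HB.pack phif (GRing.isLinear.Build _ _ _ _ phif phif_lin).
Definition Phi : 'Hom(X, V) := linfun phiL.
Lemma PhiE v a : Phi v a = La a v - Ra a v.
Proof. by rewrite (lfunE phiL) ffunE. Qed.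

Definition U a := limg (Le (tgt a) \o Re (src a))%VF.

Lemma memU a v : v \in U a <-> Le (tgt a) v = v /\ Re (src a) v = v.
Proof.
split.
  case/memv_imgP => u _ ->; rewrite comp_lfunE Leid; split=> //.
  by rewrite -LRv Reid.
case=> H1 H2; rewrite -{1}H1 -{1}H2 -comp_lfunE.
exact: memv_img (memvf v).
Qed.

Definition W := (\sum_(a : 'I_nA) (inj a @: U a))%VS.

Lemma memW f : f \in W <-> forall a, f a \in U a.
Proof.
split.
  move/memv_sumP => [g Hg ->] b; rewrite sum_ffunE (bigD1 b) //= big1 ?addr0.
    by have /memv_imgP [u Hu ->] := Hg b isT; rewrite injE eqxx.
  move=> a ne; have /memv_imgP [u Hu ->] := Hg a isT.
  by rewrite injE eq_sym (negPf ne).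
move=> H.
have -> : f = \sum_a inj a (f a).
  apply/ffunP => b; rewrite sum_ffunE (bigD1 b) //= big1 ?addr0.
    by rewrite injE eqxx.
  by move=> a ne; rewrite injE eq_sym (negPf ne).
by apply: memv_sumr => a _; apply: memv_img.
Qed.

Lemma dimW : \dim W = (\sum_a \dim (U a))%N.
Proof.
have dx : directv W.
  apply/directv_sum_independent => us Hus Hsum a _.
  have /memv_imgP [u Hu Eu] := Hus a isT.
  have := congr1 (fun f : V => f a) Hsum; rewrite sum_ffunE ffunE (bigD1 a) //= big1.
    rewrite addr0 => u0; rewrite Eu; rewrite Eu injE eqxx in u0; by rewrite u0 linear0.
  move=> b ne; have /memv_imgP [u' _ ->] := Hus b isT.
  by rewrite injE eq_sym (negPf ne).
rewrite (directvP dx) /=.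
apply: eq_bigr => a _; apply: limg_dim_eq.
have /eqP -> : lker (inj a) == 0%VS.
  apply/lker0P => u v /(congr1 (fun f : V => f a)); by rewrite !injE eqxx.
by rewrite capv0.
Qed.

Definition Z0 := (\bigcap_(x : 'I_nV) lker (Le x - Re x)%VF)%VS.

Lemma memZ0 v : v \in Z0 <-> forall x, Le x v = Re x v.
Proof.
rewrite memvE; split.
  move/subv_bigcapP => H x; have := H x isT; rewrite -memvE memv_ker.
  by rewrite add_lfunE opp_lfunE subr_eq0 => /eqP.
move=> H; apply/subv_bigcapP => x _; rewrite -memvE memv_ker.
by rewrite add_lfunE opp_lfunE subr_eq0 H.
Qed.

Definition C := (Z0 :&: lker Phi)%VS.

Lemma memC v : v \in C <-> forall p, L p v = R p v.
Proof.
split.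
  case/memv_capP => /memZ0 Hz; rewrite memv_ker => /eqP Hk.
  have Ha : forall a, La a v = Ra a v.
    move=> a; apply/eqP; rewrite -subr_eq0 -PhiE Hk ffunE //.
  elim/qpath_ind => // a s h h' IH.
  have := LLv (exist _ (tgt a, s) h) (apath a) v; rewrite (qmul_step h h') /= => <-.
  have := RRv (exist _ (tgt a, s) h) (apath a) v; rewrite (qmul_step h h') /= => <-.
  by rewrite Ha LRv IH.
move=> H; apply/memv_capP; split; first by apply/memZ0 => x; apply: H.
rewrite memv_ker; apply/eqP/ffunP => a; rewrite PhiE ffunE H subrr //.
Qed.

Definition I := (Phi @: Z0)%VS.

Lemma IsubW : (I <= W)%VS.
Proof.
apply/subvP => f /memv_imgP [z /memZ0 Hz ->]; apply/memW => a.
rewrite PhiE; apply/memU; split.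
  rewrite linearB /= (Lel (apath a)) LRv (Hz (tgt a)) (Rer (apath a)) //.
rewrite linearB /= (Rel (apath a)) -LRv -(Hz (src a)) (Ler (apath a)) //.
Qed.

Lemma der_add D1 D2 : is_der L R D1 -> is_der L R D2 -> is_der L R (fun p => D1 p + D2 p).
Proof.
move=> H1 H2 p q; rewrite !linearD /= addrACA.
case E: (qmul p q) => [r|] /=; have := H1 p q; have := H2 p q; rewrite E /= => <- <- //.
by rewrite addr0.
Qed.

Lemma innerDN x p : innerD L R (- x) p = - innerD L R x p.
Proof. by rewrite /innerD !linearN opprD. Qed.
Lemma innerDD x y p : innerD L R (x + y) p = innerD L R x p + innerD L R y p.
Proof. by rewrite /innerD !linearD /= addrACA. Qed.

Lemma ffunZ (k : K) (f : V) a : (k *: f) a = k *: f a.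
Proof. by rewrite ffunE. Qed.

Lemma sum_arrows (F : 'I_nV -> 'I_nV -> nat) :
  (\sum_a F (src a) (tgt a) =
   \sum_(x : 'I_nV) \sum_(y : 'I_nV) #|[set a : 'I_nA | (src a == x) && (tgt a == y)]| * F x y)%N.
Proof.
rewrite (partition_big (fun a => (src a, tgt a)) xpredT) //= pair_big /=.
apply: eq_bigr => [[x y]] _ /=; rewrite -sum_nat_const.
apply: eq_big => a; first by rewrite inE xpair_eqE.
by rewrite xpair_eqE => /andP[/eqP -> /eqP ->].
Qed.

Definition Wc := (W :\: I)%VS.

Lemma w_in (i : 'I_(\dim Wc)) : (vbasis Wc)`_i \in Wc.
Proof. by apply: vbasis_mem; apply: mem_nth; rewrite size_tuple. Qed.

Lemma w_U (i : 'I_(\dim Wc)) a : Le (tgt a) ((vbasis Wc)`_i a) = (vbasis Wc)`_i a /\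
   Re (src a) ((vbasis Wc)`_i a) = (vbasis Wc)`_i a.
Proof.
apply/memU; have /memW := subvP (diffvSl W I) _ (w_in i); exact.
Qed.

Definition Dd (i : 'I_(\dim Wc)) := Dm (fun a => (vbasis Wc)`_i a).

Lemma main :
  exists dH dC dC0 : nat,
    [/\ H1_dim L R dH, has_dim (inv_kQ L R) dC, has_dim (inv_kQ0 L R) dC0 &
        (dH%:Z = dC%:Z - dC0%:Z +
          (\sum_(x : 'I_nV) \sum_(y : 'I_nV)
              #|[set a : 'I_nA | (src a == x) && (tgt a == y)]| *
              \dim (limg (L (vpath src tgt y) \o R (vpath src tgt x))%VF))%N%:Z)%R].
Proof.
exists (\dim Wc), (\dim C), (\dim Z0); split.
- exists Dd; split.
  + by move=> i; apply: Dm_der => a; apply: w_U.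
  + move=> E HE; set w0 := \sum_y Le y (E (e y)).
    have E'der : is_der L R (fun p => E p + innerD L R (- w0) p).
      by apply: der_add => //; apply: innerD_der.
    have E'0 : forall x, E (e x) + innerD L R (- w0) (e x) = 0.
      by move=> x; rewrite innerDN vertex_inner // subrr.
    pose m : V := [ffun a => E (apath a) + innerD L R (- w0) (apath a)].
    have mW : m \in W.
      apply/memW => a; rewrite ffunE; apply/memU.
      exact: (der_vert_zero E'der E'0 (apath a)).
    have : m \in (Wc + W :&: I)%VS by rewrite addv_diff_cap.
    case/memv_addP => u Hu [v /memv_capP [_ /memv_imgP [z Hz Ev]] Emuv].
    exists (fun i => coord (vbasis Wc) i u), (w0 + z).
    apply: der_unique => //.
    * by apply: der_comb => i; apply: Dm_der => a; apply: w_U.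
    * move=> x; rewrite big1 ?add0r; last by move=> i _; rewrite /Dd Dm_e scaler0.
      rewrite innerDD vertex_inner //; have /memZ0 Hz' := Hz.
      by rewrite /innerD Hz' subrr addr0.
    * move=> a; have Hua := congr1 (fun f : V => f a) (coord_vbasis Hu).
      rewrite /= sum_ffunE in Hua.
      have Hma := congr1 (fun f : V => f a) Emuv.
      rewrite /= ffunE ffunE innerDN Ev PhiE in Hma.
      rewrite innerDD.
      have -> : \sum_(i < \dim Wc) coord (vbasis Wc) i u *: Dd i (apath a) = u a.
        by rewrite Hua; apply: eq_bigr => i _; rewrite ffunZ /Dd Dm_a.
      have -> : innerD L R z (apath a) = La a z - Ra a z by [].
      by rewrite addrCA -Hma addrC subrK.
  + move=> c x H.
    have Hz : x \in Z0.
      apply/memZ0 => y; have := H (e y).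
      rewrite big1; last by move=> i _; rewrite /Dd Dm_e scaler0.
      by rewrite /innerD => /esym /eqP; rewrite subr_eq0 => /eqP.
    have Hs : \sum_(i < \dim Wc) c i *: (vbasis Wc)`_i = Phi x.
      apply/ffunP => a; rewrite sum_ffunE PhiE; have := H (apath a); rewrite /innerD => <-.
      by apply: eq_bigr => i _; rewrite ffunZ /Dd Dm_a.
    have H0 : \sum_(i < \dim Wc) c i *: (vbasis Wc)`_i = 0.
      apply/eqP; rewrite -memv0 -(capv_diff W I) memv_cap; apply/andP; split.
        by apply: memv_suml => i _; apply: memvZ; apply: w_in.
      by rewrite Hs; apply: memv_img.
    by move/freeP: (basis_free (vbasisP Wc)) => Hf; apply: Hf.
- exists C; split => // v; split; first by move/memC.
  by move=> H; apply/memC.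
- exists Z0; split => // v; split; first by move/memZ0.
  by move=> H; apply/memZ0.
- have h1 := limg_ker_dim Phi Z0.
  have h2 := dimv_cap_compl W I; rewrite (capv_idPr IsubW) dimW in h2.
  rewrite -(sum_arrows (fun x y => \dim (limg (Le y \o Re x)%VF))) -h2.
  rewrite -[\dim Z0]h1 /C /I.
  have key : forall a b c : int, c = a - (a + b) + (b + c).
    by move=> a b c; rewrite opprD [a + _]addrA subrr add0r addKr.
  rewrite !PoszD; exact: key.
Qed.

End Pf.

Unset Implicit Arguments.

Theorem corollary4p6 (K : fieldType) (X : vectType K) (nV nA : nat)
  (src tgt : 'I_nA -> 'I_nV) (L R : qpath src tgt -> 'End(X))
  (hX : is_bimod L R) :
  exists dH dC dC0 : nat,
    [/\ H1_dim L R dH, has_dim (inv_kQ L R) dC, has_dim (inv_kQ0 L R) dC0 &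
        (dH%:Z = dC%:Z - dC0%:Z +
          (\sum_(x : 'I_nV) \sum_(y : 'I_nV)
              #|[set a : 'I_nA | (src a == x) && (tgt a == y)]| *
              \dim (limg (L (vpath src tgt y) \o R (vpath src tgt x))%VF))%N%:Z)%R].
Proof. exact: (main hX). Qed.
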